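(* Let $D$ be a division algebra and let $\sigma_1,\sigma_2$ be two commuting automorphisms of $D$. In the skew polynomial ring $T=D[t_1,t_2;\sigma_1,\sigma_2]$, let $I$ be the two-sided ideal generated by $t_1t_2$, and let $S=T/I$. Then every two commuting elements of $S$ are (left) algebraically dependent over $D$.
   Context: $D[t_1,t_2;\sigma_1,\sigma_2]$ is the skew polynomial ring in two commuting variables with $t_ia=\sigma_i(a)t_i$ for $a\in D$. Commuting elements $x_1,x_2$ of a ring $S\supseteq D$ are (left) algebraically dependent over $D$ if the set of monomials $\{x_1^{i_1}x_2^{i_2}:(i_1,i_2)\in\mathbb{Z}_{\ge0}^2\}$ is not left linearly independent over $D$ (in particular if two distinct exponent pairs give the same monomial). *)

(* Defs.v *)
From HB Require Import structures.
From mathcomp Require Import all_boot all_order all_algebra.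
Set Implicit Arguments. Unset Strict Implicit. Unset Printing Implicit Defensive.
Import Order.TTheory GRing.Theory.
Local Open Scope ring_scope.

(* Elements of the skew polynomial ring T = D[t1,t2; s1,s2] are represented by
   their coefficient functions  f : nat -> nat -> D  (f i j = coefficient of
   t1^i t2^j, written on the left), subject to finite support.  The operations
   below are defined on all coefficient functions (skew power series), and the
   ring T is the subset of finitely supported ones. *)

Definition skf (D : Type) := nat -> nat -> D.

Definition finsupp (D : nzRingType) (f : skf D) : Prop :=
  exists N : nat, forall i j : nat, (N <= i + j)%N -> f i j = 0.

Definition sk_add (D : nzRingType) (f g : skf D) : skf D :=
  fun i j => f i j + g i j.

Definition sk_sub (D : nzRingType) (f g : skf D) : skf D :=
  fun i j => f i j - g i j.

Definition sk_zero (D : nzRingType) : skf D := fun _ _ => 0.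

Definition sk_C (D : nzRingType) (c : D) : skf D :=
  fun i j => if (i == 0%N) && (j == 0%N) then c else 0.

Definition sk_t1t2 (D : nzRingType) : skf D :=
  fun i j => if (i == 1%N) && (j == 1%N) then 1 else 0.

(* skew multiplication:  (a t1^i t2^j)(b t1^k t2^l)
                        = a s1^i(s2^j(b)) t1^(i+k) t2^(j+l) *)
Definition sk_mul (D : nzRingType) (s1 s2 : D -> D) (f g : skf D) : skf D :=
  fun m n => \sum_(i < m.+1) \sum_(j < n.+1)
               f i j * iter i s1 (iter j s2 (g (m - i)%N (n - j)%N)).

Definition sk_exp (D : nzRingType) (s1 s2 : D -> D) (f : skf D) (k : nat) : skf D :=
  iter k (sk_mul s1 s2 f) (sk_C 1).

Definition sk_mono (D : nzRingType) (s1 s2 : D -> D) (x1 x2 : skf D) (i j : nat)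
  : skf D :=
  sk_mul s1 s2 (sk_exp s1 s2 x1 i) (sk_exp s1 s2 x2 j).

Definition sk_lincomb (D : nzRingType) (s1 s2 : D -> D) (N : nat)
  (c : nat -> nat -> D) (x1 x2 : skf D) : skf D :=
  fun m n => \sum_(i < N) \sum_(j < N) c i j * sk_mono s1 s2 x1 x2 i j m n.

Inductive in_I (D : nzRingType) (s1 s2 : D -> D) : skf D -> Prop :=
| I_gen : in_I s1 s2 (sk_t1t2 D)
| I_zero : in_I s1 s2 (sk_zero D)
| I_add f g : in_I s1 s2 f -> in_I s1 s2 g -> in_I s1 s2 (sk_add f g)
| I_mull a f : finsupp a -> in_I s1 s2 f -> in_I s1 s2 (sk_mul s1 s2 a f)
| I_mulr f a : finsupp a -> in_I s1 s2 f -> in_I s1 s2 (sk_mul s1 s2 f a)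
| I_ext f g : in_I s1 s2 f -> (forall i j, f i j = g i j) -> in_I s1 s2 g.

(* Main.v *)
Require Import Defs.
From HB Require Import structures.
From mathcomp Require Import all_boot all_order all_algebra.
From mathcomp Require Import zify.
Import Order.TTheory GRing.Theory.
Local Open Scope ring_scope.

Lemma solve_sys (D : unitRingType) (hD : forall x : D, x != 0 -> x \is a GRing.unit)
  (m : nat) : forall n (v : 'I_n -> nat -> D), (m < n)%N ->
  exists c : 'I_n -> D, (exists k, c k != 0) /\
     forall r, (r < m)%N -> \sum_k c k * v k r = 0.
Proof.
elim: m => [|m IH] n v hn.
  by exists (fun _ => 1); split => //; exists (Ordinal hn); exact: oner_neq0.
have [k0 hk0|allz] := pickP (fun k => v k m != 0); last first.
  have [c [hc hr]] := IH n v (ltnW hn).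
  exists c; split => // r; rewrite ltnS leq_eqVlt => /orP [/eqP ->|/hr //].
  by apply: big1 => k _; move/negbFE: (allz k) => /eqP ->; rewrite mulr0.
set u := v k0 m.
have hu : u \is a GRing.unit by apply: hD.
pose w (j : 'I_n.-1) r := v (lift k0 j) r - (v (lift k0 j) m * u^-1) * v k0 r.
have hn' : (m < n.-1)%N by move: hn; case: n {v k0 hk0 u hu w} => //.
have [d [[j0 hj0] hr]] := IH n.-1 w hn'.
pose c0 := - (\sum_j d j * v (lift k0 j) m) * u^-1.
exists (fun k => if unlift k0 k is Some j then d j else c0); split.
  by exists (lift k0 j0); rewrite liftK.
move=> r hr1.
rewrite (bigD1_ord k0) //= unlift_none.
under eq_bigr do rewrite liftK.
rewrite ltnS leq_eqVlt in hr1; case/orP: hr1 => [/eqP ->|hr1].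
  rewrite /c0 -mulrA mulVr // mulr1 addrC.
  by rewrite subrr.
have := hr r hr1; rewrite /w /=.
under eq_bigr => j _ do rewrite /=.
under eq_bigr => j _ do rewrite mulrBr.
rewrite sumrB => /eqP; rewrite subr_eq0 => /eqP E.
rewrite E /c0 !mulNr !mulr_suml.
under [X in _ + X]eq_bigr do rewrite !mulrA.
by rewrite addNr.
Qed.

Set Implicit Arguments.
Section Skew.
Variable D : unitRingType.
Variables s1 s2 : {rmorphism D -> D}.

Lemma iter_rm0 (s : {rmorphism D -> D}) k : iter k s 0 = 0.
Proof. by elim: k => //= k ->; rewrite rmorph0. Qed.
Lemma iter_rm1 (s : {rmorphism D -> D}) k : iter k s 1 = 1.
Proof. by elim: k => //= k ->; rewrite rmorph1. Qed.

Definition bnd (f : skf D) A := forall i j, (A <= i + j)%N -> f i j = 0.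

Lemma bnd_mono f A B : bnd f A -> (A <= B)%N -> bnd f B.
Proof. move=> h hab i j hij; apply: h; lia. Qed.

Lemma bnd_mul f g A B : bnd f A -> bnd g B -> bnd (sk_mul s1 s2 f g) (A + B).
Proof.
move=> hf hg m n hmn; rewrite /sk_mul; apply: big1 => i _; apply: big1 => j _.
have hi := ltn_ord i; have hj := ltn_ord j.
case: (leqP A (i + j)) => h; first by rewrite hf // mul0r.
by rewrite hg ?iter_rm0 ?mulr0 //; lia.
Qed.

Lemma bnd_C : bnd (sk_C 1) 1.
Proof. by move=> i j h; rewrite /sk_C; case: i j h => [|i] [|j]. Qed.

Lemma bnd_exp x A k : bnd x A -> bnd (sk_exp s1 s2 x k) (k * A + 1).
Proof.
move=> hx; elim: k => [|k IH] /=; first exact: bnd_C.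
have := bnd_mul hx IH; rewrite /sk_exp /= => h; apply: bnd_mono h _; lia.
Qed.

Lemma bnd_mono2 x1 x2 A i j : bnd x1 A -> bnd x2 A ->
  bnd (sk_mono s1 s2 x1 x2 i j) ((i + j) * A + 2).
Proof.
move=> h1 h2; apply: bnd_mono (bnd_mul (bnd_exp i h1) (bnd_exp j h2)) _; lia.
Qed.

Definition mon (a : D) p q : skf D := fun i j => if (i == p) && (j == q) then a else 0.

Lemma mon_fs a p q : finsupp (mon a p q).
Proof.
exists (p + q).+1 => i j h; rewrite /mon.
case: eqP => [ei|//]; case: eqP => [ej|//]; lia.
Qed.

Lemma sum_delta (F : nat -> D) p k :
  \sum_(i < k) (if i == p :> nat then F i else 0) = if (p < k)%N then F p else 0.
Proof. by rewrite -big_mkcond big_ord1_eq. Qed.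

Lemma mul_mon_t1t2 a p q m n :
  sk_mul s1 s2 (mon a p q) (sk_t1t2 D) m n = mon a p.+1 q.+1 m n.
Proof.
rewrite /sk_mul /mon.
pose X i j := a * iter i s1 (iter j s2 (sk_t1t2 D (m - i)%N (n - j)%N)).
transitivity (\sum_(i < m.+1) if i == p :> nat then
    \sum_(j < n.+1) (if j == q :> nat then X i j else 0) else 0).
  apply: eq_bigr => i _; case: eqP => [_|_] /=; last by apply: big1 => j _; rewrite mul0r.
  by apply: eq_bigr => j _; case: eqP => _; rewrite ?mul0r.
rewrite (sum_delta (fun i => \sum_(j < n.+1) (if j == q :> nat then X i j else 0))).
rewrite (sum_delta (fun j => X p j)) /X /sk_t1t2.
case hp: (p < m.+1)%N; case hq: (q < n.+1)%N; case h1: ((m - p)%N == 1%N); case h2: ((n - q)%N == 1%N);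
  case h3: (m == p.+1); case h4: (n == q.+1) => /=; rewrite ?iter_rm0 ?iter_rm1 ?mulr0 ?mulr1 //; lia.
Qed.

Lemma inI_sum (T : Type) (s : seq T) (F : T -> skf D) :
  (forall k, in_I s1 s2 (F k)) -> in_I s1 s2 (fun m n => \sum_(k <- s) F k m n).
Proof.
move=> h; elim: s => [|x s IH].
  by apply: I_ext (I_zero _ _) _ => i j; rewrite big_nil.
by apply: I_ext (I_add (h x) IH) _ => i j; rewrite big_cons.
Qed.

Lemma inI_axes f : finsupp f -> (forall i, f i 0%N = 0) -> (forall j, f 0%N j = 0) ->
  in_I s1 s2 f.
Proof.
case=> N hN h1 h2.
pose G (pq : 'I_N * 'I_N) : skf D := if (0 < pq.1)%N && (0 < pq.2)%N then
  sk_mul s1 s2 (mon (f pq.1 pq.2) pq.1.-1 pq.2.-1) (sk_t1t2 D) else sk_zero D.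
apply: I_ext (inI_sum (index_enum _) G _) _.
  move=> k; rewrite /G; case: ifP => _; last exact: I_zero.
  apply: I_mull; [exact: mon_fs | exact: I_gen].
move=> m n.
have EG : forall k, G k m n = if (k.1 == m :> nat) && (k.2 == n :> nat) then f m n else 0.
  move=> [i j] /=; rewrite /G /=.
  case: (posnP i) => [->|hi]; case: (posnP j) => [->|hj] /=;
    rewrite /sk_zero ?mul_mon_t1t2 /mon ?prednK // ?(eq_sym m) ?(eq_sym n);
    case: eqP => [<-|]; case: eqP => [<-|] //=; rewrite ?h1 ?h2 //.
rewrite (eq_bigr _ (fun k _ => EG k)).
rewrite -(pair_bigA _ (fun (i j : 'I_N) => if (i == m :> nat) && (j == n :> nat) then f m n else 0)) /=.
transitivity (\sum_(i < N) if i == m :> nat then \sum_(j < N) (if j == n :> nat then f m n else 0) else 0).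
  apply: eq_bigr => i _; case: eqP => _ //=; exact: big1.
rewrite (sum_delta (fun _ => \sum_(j < N) (if j == n :> nat then f m n else 0))).
rewrite (sum_delta (fun _ => f m n)).
case hm: (m < N)%N; case hn: (n < N)%N => //; symmetry; apply: hN; lia.
Qed.
End Skew.

Unset Implicit Arguments.

Theorem lemma5p9
  (D : unitRingType)
  (hD : forall x : D, x != 0 -> x \is a GRing.unit)
  (s1 s2 : {rmorphism D -> D})
  (bij1 : bijective s1) (bij2 : bijective s2)
  (comm12 : forall a : D, s1 (s2 a) = s2 (s1 a))
  (x1 x2 : skf D)
  (hx1 : finsupp x1) (hx2 : finsupp x2)
  (hcomm : in_I s1 s2 (sk_sub (sk_mul s1 s2 x1 x2) (sk_mul s1 s2 x2 x1))) :
  exists (N : nat) (c : nat -> nat -> D),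
    (exists i j : nat, [/\ (i < N)%N, (j < N)%N & c i j != 0]) /\
    in_I s1 s2 (sk_lincomb s1 s2 N c x1 x2).
Proof.
case: hx1 => N1 h1; case: hx2 => N2 h2.
pose A := (N1 + N2)%N.
have b1 : bnd D x1 A by apply: (bnd_mono A h1); lia.
have b2 : bnd D x2 A by apply: (bnd_mono A h2); lia.
pose N := (4 * A + 3).+1.
pose B := (2 * N * A + 2)%N.
have hbm : forall i j, (i < N)%N -> (j < N)%N -> bnd D (sk_mono s1 s2 x1 x2 i j) B.
  move=> i j hi hj; apply: (bnd_mono B (bnd_mono2 s1 s2 i j b1 b2)); rewrite /B; nia.
pose T := ('I_N * 'I_N)%type.
pose e r := if (r < B)%N then (r, 0%N) else (0%N, (r - B)%N).
pose v (k : 'I_#|{: T}|) r :=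
  sk_mono s1 s2 x1 x2 (enum_val k).1 (enum_val k).2 (e r).1 (e r).2.
have hcard : (2 * B < #|{: T}|)%N by rewrite card_prod !card_ord /B /N; nia.
have [c [[k hk] hr]] := @solve_sys D hD _ _ v hcard.
exists N, (fun i j => c (enum_rank ((inord i, inord j) : T))).
split.
  exists (enum_val k).1, (enum_val k).2; split => //.
  by rewrite !inord_val -surjective_pairing enum_valK.
have EL : forall m n, sk_lincomb s1 s2 N (fun i j => c (enum_rank ((inord i, inord j) : T))) x1 x2 m n
   = \sum_k c k * sk_mono s1 s2 x1 x2 (enum_val k).1 (enum_val k).2 m n.
  move=> m n; rewrite /sk_lincomb.
  under eq_bigr do under eq_bigr do rewrite !inord_val.
  rewrite (pair_bigA _ (fun i j => c (enum_rank ((i, j) : T)) * sk_mono s1 s2 x1 x2 i j m n)) /=.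
  rewrite (reindex (enum_val : 'I_#|{: T}| -> T)) /=; last by apply: onW_bij; exact: enum_val_bij.
  by apply: eq_bigr => k' _; rewrite -surjective_pairing enum_valK.
apply: (inI_axes s1 s2).
- exists B => m n h; rewrite EL; apply: big1 => k' _.
  by rewrite (hbm _ _ (ltn_ord _) (ltn_ord _)) ?mulr0.
- move=> i; rewrite EL; case: (ltnP i B) => hi.
    have hi2 : (i < 2 * B)%N by lia.
    have := hr i hi2; rewrite /v /e hi /=; exact.
  apply: big1 => k' _; rewrite (hbm _ _ (ltn_ord _) (ltn_ord _)) ?mulr0 //; lia.
- move=> j; rewrite EL; case: (ltnP j B) => hj.
    have hjB : (j + B < 2 * B)%N by lia.
    have := hr (j + B)%N hjB; rewrite /v /e.
    have -> : (j + B < B)%N = false by lia.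
    by rewrite addnK /=.
  apply: big1 => k' _; rewrite (hbm _ _ (ltn_ord _) (ltn_ord _)) ?mulr0 //; lia.
Qed.
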